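(* Let $t\le 1/2$ be a positive rational number. If $G$ is a minimally $t$-tough chordal graph, then every simplicial vertex of $G$ has degree $1$.
   Context: All graphs are finite, simple and undirected. A graph is chordal if it contains no induced cycle of length at least $4$. A vertex $v$ is simplicial if its neighborhood $N(v)$ forms a clique. $\omega(H)$ denotes the number of components of $H$. A cutset of $G$ is a vertex set $S$ with $G-S$ disconnected. For positive real $t$, $G$ is $t$-tough if $\omega(G-S)\le |S|/t$ for every cutset $S$; the toughness $\tau(G)$ is the largest such $t$, with $\tau(K_n)=\infty$ for all $n\ge1$. $G$ is minimally $t$-tough if $\tau(G)=t$ and $\tau(G-e)<t$ for every edge $e$ of $G$. *)

(* Defs.v *)
From HB Require Import structures.
From mathcomp Require Import all_boot all_order all_algebra.
Set Implicit Arguments. Unset Strict Implicit. Unset Printing Implicit Defensive.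
Import Order.TTheory GRing.Theory Num.Theory.

Section Graphs.
Variable T : finType.

Definition simple_graph (g : rel T) : Prop := symmetric g /\ irreflexive g.

Definition induced (g : rel T) (A : {set T}) : rel T :=
  [rel x y | [&& x \in A, y \in A & g x y]].

Definition ncomp (g : rel T) (A : {set T}) : nat :=
  #|[set [set y in A | connect (induced g A) x y] | x in A]|.

Definition ncomp_del (g : rel T) (S : {set T}) : nat := ncomp g (~: S).

Definition cutset (g : rel T) (S : {set T}) : bool := 1 < ncomp_del g S.

(* G is t-tough: omega(G-S) <= |S|/t for every cutset S, i.e. t*omega <= |S| *)
Definition t_tough (g : rel T) (t : rat) : Prop :=
  forall S : {set T}, cutset g S -> (t * (ncomp_del g S)%:R <= (#|S|)%:R)%R.

(* tau(G) = t : t is the largest value for which G is t-tough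
   (for complete graphs no such value exists: tau = infinity) *)
Definition toughness_is (g : rel T) (t : rat) : Prop :=
  t_tough g t /\ forall t' : rat, (0 < t')%R -> t_tough g t' -> (t' <= t)%R.

Definition del_edge (g : rel T) (u v : T) : rel T :=
  [rel x y | g x y && ~~ (((x == u) && (y == v)) || ((x == v) && (y == u)))].

Definition minimally_tough (g : rel T) (t : rat) : Prop :=
  toughness_is g t /\
  forall u v : T, g u v ->
    exists t' : rat, toughness_is (del_edge g u v) t' /\ (t' < t)%R.

Definition cyc_adj (n : nat) (i j : 'I_n) : bool :=
  (j == i.+1 %% n :> nat) || (i == j.+1 %% n :> nat).

(* chordal: no induced cycle of length at least 4 *)
Definition chordal (g : rel T) : Prop :=
  forall (n : nat) (f : 'I_n -> T), 4 <= n -> injective f ->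
    ~ (forall i j : 'I_n, g (f i) (f j) = cyc_adj i j).

Definition simplicial (g : rel T) (v : T) : Prop :=
  forall x y : T, g v x -> g v y -> x != y -> g x y.

Definition degree (g : rel T) (v : T) : nat := #|[set x | g v x]|.

End Graphs.

(* Main.v *)
Require Import Defs.
From HB Require Import structures.
From mathcomp Require Import all_boot all_order all_algebra.
From mathcomp Require Import lra.
Import Order.TTheory GRing.Theory Num.Theory.
Set Implicit Arguments. Unset Strict Implicit. Unset Printing Implicit Defensive.

Lemma induced_sym (T : finType) (e : rel T) A : symmetric e -> symmetric (induced e A).
Proof. by move=> se a b; rewrite /induced /= se; case: (a \in A); case: (b \in A). Qed.

Lemma del_sym (T : finType) (g : rel T) x y : symmetric g -> symmetric (del_edge g x y).
Proof.
move=> sg a b; rewrite /del_edge /= sg; congr (_ && ~~ _).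
by case: (a == x); case: (b == y); case: (a == y); case: (b == x).
Qed.

Lemma comp_eq (T : finType) (e : rel T) (A : {set T}) a b : symmetric e ->
  connect e a b -> [set z in A | connect e a z] = [set z in A | connect e b z].
Proof.
move=> se hab; apply/setP => z; rewrite !inE; congr (_ && _).
apply/idP/idP => h.
- by apply: connect_trans h; rewrite (sym_connect_sym se).
- exact: connect_trans hab h.
Qed.

Lemma case1 (T : finType) (g : rel T) x y (A : {set T}) : symmetric g ->
  ~~ [&& x \in A, y \in A & ~~ connect (induced (del_edge g x y) A) x y] ->
  ncomp g A = ncomp (del_edge g x y) A.
Proof.
move=> sg hc.
set H := induced (del_edge g x y) A.
have sH : symmetric H by apply: induced_sym; apply: del_sym.
have E : connect (induced g A) =2 connect H.
  move=> a b; apply/idP/idP; apply: connect_sub => c d /=.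
  - case/and3P => hc' hd gcd.
    case hdel: (del_edge g x y c d); first by apply: connect1; rewrite /H /induced /= hc' hd hdel.
    move: hdel; rewrite /del_edge /= gcd /= => /negbFE /orP [] /andP [/eqP ? /eqP ?]; subst.
    + by move: hc; rewrite hc' hd /= => /negbNE.
    + by rewrite sym_connect_sym //; move: hc; rewrite hc' hd /= => /negbNE.
  - case/and3P => hc' hd /andP [gcd _]; apply: connect1; by rewrite /induced /= hc' hd gcd.
rewrite /ncomp; apply: eq_card => X; apply/imsetP/imsetP => -[a ha ->]; exists a => //; apply/setP=> z; by rewrite !inE E.
Qed.

Lemma case2 (T : finType) (g : rel T) x y v (S : {set T}) :
  symmetric g -> irreflexive g -> simplicial g v -> g v x -> g v y -> x != y ->
  x \in ~: S -> y \in ~: S -> ~~ connect (induced (del_edge g x y) (~: S)) x y ->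
  v \in S /\ ncomp (del_edge g x y) (~: S) <= (ncomp g (~: (S :\ v))).+1.
Proof.
move=> sg ig hsimp gvx gvy xy xA yA hnc.
set A := ~: S in xA yA hnc *.
have hAS : forall z, (z \in A) = (z \notin S) by move=> z; rewrite inE.
clearbody A.
set H := induced (del_edge g x y) A in hnc *.
have sH : symmetric H by apply: induced_sym; apply: del_sym.
have vx : v != x by apply: contraTneq gvx => ->; rewrite ig.
have vy : v != y by apply: contraTneq gvy => ->; rewrite ig.
have Hd : forall a b, a \in A -> b \in A -> g a b ->
    ~~ ((a == x) && (b == y) || (a == y) && (b == x)) -> H a b.
  by move=> a b aA bA gab hn; rewrite /H /induced /del_edge /= aA bA gab hn.
have nb : forall z, z \in A -> g v z -> (z == x) || (z == y).
  move=> z zA gvz; case/boolP: ((z == x) || (z == y)) => // /norP [zx zy]; exfalso; apply: (negP hnc).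
  have gzx := hsimp z x gvz gvx zx.
  have gzy := hsimp z y gvz gvy zy.
  apply: (connect_trans (y := z)); apply: connect1; apply: Hd => //.
  - by rewrite sg.
  - by rewrite eqxx (negbTE zy) (negbTE xy) /=.
  - by rewrite (negbTE zx) (negbTE zy).
have vS : v \in S.
  apply/negPn/negP => vnS; have vA : v \in A by rewrite hAS.
  apply: (negP hnc); apply: (connect_trans (y := v)); apply: connect1; apply: Hd => //.
  - by rewrite sg.
  - by rewrite eqxx (negbTE vy) (negbTE xy).
  - by rewrite (negbTE vx) (negbTE vy).
split => //.
have vA : v \notin A by rewrite hAS negbK.
set A' := ~: (S :\ v).
have A'E : forall z, (z \in A') = (z == v) || (z \in A).
  by move=> z; rewrite !inE negb_and negbK hAS.
pose cH := fun a => [set z in A | connect H a z].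
pose cG := fun a => [set z in A' | connect (induced g A') a z].
pose lam := fun z => if (z == v) || (z \in cH y) then cH x else cH z.
have xny : x \notin cH y by rewrite inE xA /= (sym_connect_sym sH).
have yy : y \in cH y by rewrite inE yA connect0.
have lamx : lam x = cH x by rewrite /lam eq_sym (negbTE vx) (negbTE xny).
have lamy : lam y = cH x by rewrite /lam yy orbT.
have lamv : lam v = cH x by rewrite /lam eqxx.
have stepv : forall w, w \in A' -> g v w -> lam v = lam w.
  move=> w wA' gvw; have wv : w != v by apply: contraTneq gvw => ->; rewrite ig.
  have wA : w \in A by move: wA'; rewrite A'E (negbTE wv).
  by case/orP: (nb w wA gvw) => /eqP ->; rewrite lamv ?lamx ?lamy.
have lamE : forall z w, induced g A' z w -> lam z = lam w.
  move=> z w /and3P [zA' wA' gzw].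
  case zv: (z == v); first by move/eqP: zv => zv; subst z; apply: stepv.
  case wv: (w == v).
    by move/eqP: wv => wv; subst w; symmetry; apply: stepv => //; rewrite sg.
  have zA : z \in A by move: zA'; rewrite A'E zv.
  have wA : w \in A by move: wA'; rewrite A'E wv.
  case hdel: ((z == x) && (w == y) || (z == y) && (w == x)).
    by case/orP: hdel => /andP [/eqP -> /eqP ->]; rewrite lamx lamy.
  have czw : connect H z w by apply: connect1; apply: Hd => //; rewrite hdel.
  rewrite /lam zv wv /= /cH (comp_eq A sH czw) !inE zA wA /=.
  have -> : connect H y z = connect H y w; last by [].
  apply/idP/idP => h; first exact: connect_trans h czw.
  by apply: connect_trans h _; rewrite (sym_connect_sym sH).
have lamC : forall a b, connect (induced g A') a b -> lam a = lam b.
  move=> a b hab.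
  have hc : closed (induced g A') [pred z | lam z == lam a].
    by move=> z w hzw; rewrite !inE (lamE z w hzw).
  have := closed_connect hc hab; rewrite !inE eqxx => /esym /eqP ->.
  done.
pose B := [set z in A | z \notin cH y].
have lamB : forall b, b \in B -> lam b = cH b.
  move=> b; rewrite inE => /andP [bA bny].
  have bv : (b == v) = false by apply/negP => /eqP bv; subst b; rewrite bA in vA.
  by rewrite /lam bv (negbTE bny).
have h1 : cH @: A \subset cH y |: (cH @: B).
  apply/subsetP => X /imsetP [a aA ->]; case: (boolP (a \in cH y)) => hay.
  - rewrite !inE; apply/orP; left; apply/eqP.
    move: hay; rewrite inE => /andP [_ hay]; rewrite /cH (comp_eq A sH hay) //.
  - by rewrite !inE; apply/orP; right; apply: imset_f; rewrite inE aA.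
pose psi := fun X : {set T} => if [pick z in X :&: B] is Some z then cH z else set0.
have h2 : cH @: B \subset psi @: (cG @: B).
  apply/subsetP => X /imsetP [b bB ->]; apply/imsetP; exists (cG b); first exact: imset_f.
  rewrite /psi; case: pickP => [z /setIP [zc zB] | none].
  - move: zc; rewrite inE => /andP [_ hbz].
    by rewrite -(lamB _ bB) -(lamB _ zB); apply: lamC.
  - have bA : b \in A by move: bB; rewrite inE => /andP [].
    move: (none b) => /=; rewrite in_setI bB andbT /cG inE A'E bA orbT connect0.
    by [].
have h3 : B \subset A'.
  by apply/subsetP => b; rewrite inE A'E => /andP [-> _]; rewrite orbT.
have e1 : ncomp (del_edge g x y) A = #|cH @: A| by [].
have e2 : ncomp g A' = #|cG @: A'| by [].
rewrite e1 e2.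
apply: (leq_trans (subset_leq_card h1)); rewrite cardsU1.
apply: (leq_trans (leq_add (leq_b1 _) (subset_leq_card h2))).
rewrite add1n ltnS; apply: (leq_trans (leq_imset_card _ _)).
exact: subset_leq_card (imsetS _ h3).
Qed.

Lemma core (T : finType) (g : rel T) (t : rat) v x y :
  symmetric g -> irreflexive g -> (0 < t)%R -> (t <= 1 / 2)%R -> t_tough g t ->
  simplicial g v -> g v x -> g v y -> x != y -> t_tough (del_edge g x y) t.
Proof.
move=> sg ig t0 t2 tt hs gvx gvy xy S hcut.
rewrite leNgt; apply/negP => hlt.
move: hcut hlt; rewrite /cutset /ncomp_del => hcut hlt.
case hP: [&& x \in ~: S, y \in ~: S & ~~ connect (induced (del_edge g x y) (~: S)) x y].
- case/and3P: hP => xA yA hnc.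
  have [vS hle] := case2 sg ig hs gvx gvy xy xA yA hnc.
  move: hcut hlt hle.
  set c := ncomp (del_edge g x y) (~: S); set w := ncomp g (~: (S :\ v)) => hcut hlt hle.
  have hS : #|S| = (#|S :\ v|).+1 by rewrite (cardsD1 v S) vS.
  move: hlt; rewrite hS -natr1 => hlt.
  have hcw : (c%:R <= w%:R + 1 :> rat)%R by rewrite natr1 ler_nat.
  have hm := ler_wpM2l (ltW t0) hcw.
  case: (ltnP 1 w) => hw.
  + have := tt (S :\ v) hw => ht; lra.
  + have hc2 : (c%:R <= 2 :> rat)%R.
      by rewrite ler_nat; apply: leq_trans hle _; rewrite ltnS.
    have hm2 := ler_wpM2l (ltW t0) hc2.
    have : (0 <= #|S :\ v|%:R :> rat)%R by apply: ler0n.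
    lra.
- have E := @case1 T g x y (~: S) sg (negbT hP).
  have := tt S; rewrite /cutset /ncomp_del E => /(_ hcut) ht; lra.
Qed.

Theorem mainTheorem3 (T : finType) (g : rel T) (t : rat) :
  simple_graph g -> (0 < t)%R -> (t <= 1 / 2)%R -> chordal g ->
  minimally_tough g t ->
  forall v : T, simplicial g v -> degree g v = 1%N.
Proof.
move=> [sg ig] t0 t2 _ [[tt tmax] hmin] v hs.
case hd: (degree g v) => [|[|n]] //; exfalso.
- have nv : forall z, g v z = false.
    move=> z; move: hd; rewrite /degree => /cards0_eq /setP /(_ z).
    by rewrite !inE.
  case: (pickP (fun w => w != v)) => [w wv | none].
  + have hcl : closed (induced g (~: set0)) (pred1 v).
      move=> a b /and3P [_ _ gab]; rewrite !inE.
      case: (eqVneq a v) => [av | av]; first by rewrite av nv in gab.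
      case: (eqVneq b v) => [bv | bv]; last by [].
      by rewrite bv sg nv in gab.
    have hcut : cutset g set0.
      rewrite /cutset /ncomp_del /ncomp; apply/card_gt1P.
      exists [set y0 in ~: set0 | connect (induced g (~: set0)) v y0].
      exists [set y0 in ~: set0 | connect (induced g (~: set0)) w y0].
      split; try by apply: imset_f; rewrite !inE.
      apply/negP => /eqP /setP /(_ w); rewrite !inE connect0.
      move=> /(closed_connect hcl); rewrite !inE eqxx => /esym; by rewrite (negbTE wv).
    have := tt set0 hcut; rewrite cards0 mulr0n.
    have : (2 <= (ncomp_del g set0)%:R :> rat)%R by rewrite ler_nat.
    move=> h2 h.
    have h3 := ler_wpM2l (ltW t0) h2.
    move: h3 h t0; clear; lra.
  + have h : t_tough g (t + 1).
      move=> S; rewrite /cutset /ncomp_del => hc; exfalso; move: hc.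
      apply/negP; rewrite -leqNgt; apply: leq_trans (leq_imset_card _ _) _.
      rewrite leqNgt; apply/negP => /card_gt1P [a [b [_ _ ab]]].
      by move: (none a) (none b) ab => /= /negbFE /eqP -> /negbFE /eqP ->; rewrite eqxx.
    have tp : (0 < t + 1)%R by move: t0; clear; lra.
    by move: (tmax (t + 1)%R tp h); clear; lra.
- have : 1 < degree g v by rewrite hd.
  rewrite /degree => /card_gt1P [x [y [hx hy xy]]].
  move: hx hy; rewrite !inE => gvx gvy.
  have gxy := hs x y gvx gvy xy.
  have [t' [[_ tm'] lt']] := hmin x y gxy.
  move: lt' (tm' t t0 (core sg ig t0 t2 tt hs gvx gvy xy)); clear; lra.
Qed.
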